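(* Let $Z\colon TM\setminus 0\to TM$ be a smooth vector field along $E$ (components $Z^\mu(x,y)$) and let $s\colon M\to TM\setminus 0$ be a smooth section. Then on $M$ \[ \nabla^{s^*g}\cdot s^*Z=s^*\big(\nabla^{HC}\cdot Z\big)+I_\mu(x,s(x))\,D_{s^*Z}s^\mu+\frac{\partial Z^\mu}{\partial y^\beta}(x,s(x))\,D_\mu s^\beta , \] where $s^*Z$ is the vector field $x\mapsto Z^\mu(x,s(x))\partial_\mu$ on $M$, $\nabla^{s^*g}\cdot$ denotes the divergence with respect to the Levi-Civita connection of the pseudo-Riemannian metric $s^*g$ (components $g_{\alpha\beta}(x,s(x))$), and $\nabla^{HC}\cdot Z=(\nabla^{HC}_\alpha Z)^\alpha$.
   Context: $M$ smooth $n$-manifold, $E=TM\setminus 0$, induced coordinates $\{x^\mu,y^\mu\}$. $\mathscr{L}\colon E\to\mathbb{R}$ smooth, positively homogeneous of degree two in $y$, with non-degenerate Finsler metric $g_{\mu\nu}=\partial^2\mathscr{L}/\partial y^\mu\partial y^\nu$ (any signature), inverse $g^{\mu\nu}$. Cartan torsion $C_{\alpha\beta\gamma}=\tfrac12\partial g_{\beta\gamma}/\partial y^\alpha$, mean Cartan torsion $I_\gamma=g^{\alpha\beta}C_{\alpha\beta\gamma}$. Spray $2G^\alpha=g^{\alpha\delta}\big(\frac{\partial^2\mathscr{L}}{\partial x^\gamma\partial y^\delta}y^\gamma-\frac{\partial\mathscr{L}}{\partial x^\delta}\big)$, $N^\alpha_\mu=\partial G^\alpha/\partial y^\mu$, $\frac{\delta}{\delta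 x^\mu}=\frac{\partial}{\partial x^\mu}-N^\nu_\mu\frac{\partial}{\partial y^\nu}$, $\Gamma^\alpha_{\beta\gamma}=\tfrac12 g^{\alpha\sigma}\big(\frac{\delta g_{\sigma\gamma}}{\delta x^\beta}+\frac{\delta g_{\sigma\beta}}{\delta x^\gamma}-\frac{\delta g_{\beta\gamma}}{\delta x^\sigma}\big)$. Horizontal covariant derivative $(\nabla^{HC}_\alpha Z)^\beta=\frac{\delta Z^\beta}{\delta x^\alpha}+\Gamma^\beta_{\mu\alpha}Z^\mu$. For the section $s$: $D_\alpha s^\mu=\partial_\alpha s^\mu+N^\mu_\alpha(x,s(x))$, $D_Ws^\mu=W^\alpha D_\alpha s^\mu$; $s^*$ of a function on $E$ means its evaluation at $y=s(x)$. *)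

(* Defs.v *)
From Stdlib Require Import Reals Lra List Arith ClassicalEpsilon.
Open Scope R_scope.

(* Points of R^n are represented as functions nat -> R; only the
   coordinates i < n are meaningful. *)
Definition vec := nat -> R.

Definition sumn (n : nat) (f : nat -> R) : R :=
  fold_right Rplus 0 (map f (seq 0 n)).

Definition kron (i j : nat) : R := if Nat.eqb i j then 1 else 0.

Definition upd (p : vec) (k : nat) (t : R) : vec :=
  fun i => if Nat.eqb i k then t else p i.

(* partial derivative d f / d p^k at p (chosen by classical choice; it is the
   unique derivative whenever it exists) *)
Definition pd (f : vec -> R) (k : nat) (p : vec) : R :=
  epsilon (inhabits 0)
    (fun l => derivable_pt_lim (fun t => f (upd p k t)) (p k) l).

(* y lies in T_xM \ 0 *)
Definition nz (n : nat) (y : vec) : Prop := exists i, (i < n)%nat /\ y i <> 0.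

Definition Efun := vec -> vec -> R.

Definition dx (k : nat) (F : Efun) : Efun := fun x y => pd (fun x' => F x' y) k x.
Definition dy (k : nat) (F : Efun) : Efun := fun x y => pd (fun y' => F x y') k y.

Fixpoint dE (ops : list (bool * nat)) (F : Efun) : Efun :=
  match ops with
  | nil => F
  | (b, k) :: t => if b then dx k (dE t F) else dy k (dE t F)
  end.

Definition contE (n : nat) (F : Efun) (x y : vec) : Prop :=
  forall eps, eps > 0 -> exists del, del > 0 /\
    forall x' y', (forall i, (i < n)%nat -> Rabs (x' i - x i) < del /\ Rabs (y' i - y i) < del) ->
      Rabs (F x' y' - F x y) < eps.

Definition smoothE (n : nat) (F : Efun) : Prop :=
  forall ops : list (bool * nat), Forall (fun o => (snd o < n)%nat) ops ->
  forall x y, nz n y ->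
    contE n (dE ops F) x y /\
    (forall k, (k < n)%nat ->
       (exists l, derivable_pt_lim (fun t => dE ops F (upd x k t) y) (x k) l) /\
       (exists l, derivable_pt_lim (fun t => dE ops F x (upd y k t)) (y k) l)).

Definition Mfun := vec -> R.

Fixpoint dM (ks : list nat) (f : Mfun) : Mfun :=
  match ks with
  | nil => f
  | k :: t => pd (dM t f) k
  end.

Definition contM (n : nat) (f : Mfun) (x : vec) : Prop :=
  forall eps, eps > 0 -> exists del, del > 0 /\
    forall x', (forall i, (i < n)%nat -> Rabs (x' i - x i) < del) ->
      Rabs (f x' - f x) < eps.

Definition smoothM (n : nat) (f : Mfun) : Prop :=
  forall ks : list nat, Forall (fun k => (k < n)%nat) ks ->
  forall x, contM n (dM ks f) x /\
    (forall k, (k < n)%nat -> exists l, derivable_pt_lim (fun t => dM ks f (upd x k t)) (x k) l).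

Section Finsler.
Variable n : nat.
Variable L : Efun.
Variable ginv : nat -> nat -> Efun.

Definition gF (mu nu : nat) : Efun := dy mu (dy nu L).

Definition Cartan (a b c : nat) : Efun := fun x y => / 2 * dy a (gF b c) x y.

Definition meanCartan (c : nat) : Efun := fun x y =>
  sumn n (fun a => sumn n (fun b => ginv a b x y * Cartan a b c x y)).

(* G^alpha  (the spray is 2 G^alpha) *)
Definition Gspray (a : nat) : Efun := fun x y =>
  / 2 * sumn n (fun d => ginv a d x y *
     (sumn n (fun c => dx c (dy d L) x y * y c) - dx d L x y)).

Definition Nlin (a mu : nat) : Efun := dy mu (Gspray a).

Definition ddelta (mu : nat) (F : Efun) : Efun := fun x y =>
  dx mu F x y - sumn n (fun nu => Nlin nu mu x y * dy nu F x y).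

Definition GammaHC (a b c : nat) : Efun := fun x y =>
  / 2 * sumn n (fun s => ginv a s x y *
     (ddelta b (gF s c) x y + ddelta c (gF s b) x y - ddelta s (gF b c) x y)).

Definition divHC (Z : nat -> Efun) : Efun := fun x y =>
  sumn n (fun a => ddelta a (Z a) x y + sumn n (fun mu => GammaHC a mu a x y * Z mu x y)).

Definition Ds (s : vec -> vec) (a mu : nat) : Mfun := fun x =>
  pd (fun x' => s x' mu) a x + Nlin mu a x (s x).

Definition DWs (s : vec -> vec) (W : nat -> Mfun) (mu : nat) : Mfun := fun x =>
  sumn n (fun a => W a x * Ds s a mu x).

Definition pullE (s : vec -> vec) (F : Efun) : Mfun := fun x => F x (s x).
Definition pullZ (s : vec -> vec) (Z : nat -> Efun) : nat -> Mfun :=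
  fun mu => pullE s (Z mu).

Definition GammaLC (s : vec -> vec) (a b c : nat) : Mfun := fun x =>
  / 2 * sumn n (fun si => ginv a si x (s x) *
     (pd (pullE s (gF si c)) b x + pd (pullE s (gF si b)) c x
      - pd (pullE s (gF b c)) si x)).

Definition divLC (s : vec -> vec) (W : nat -> Mfun) : Mfun := fun x =>
  sumn n (fun a => pd (W a) a x + sumn n (fun b => GammaLC s a a b x * W b x)).

End Finsler.

(* Main.v *)
Require Import Defs.
From Stdlib Require Import Reals Lra List Arith Lia FunctionalExtensionality PropExtensionality ClassicalEpsilon.
From Coquelicot Require Import Coquelicot.
Open Scope R_scope.

Lemma fold_plus_c l c : fold_right Rplus c l = fold_right Rplus 0 l + c.
Proof. induction l; simpl; [lra|rewrite IHl; lra]. Qed.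

Lemma sumn_S n f : sumn (S n) f = sumn n f + f n.
Proof. unfold sumn. rewrite seq_S, map_app, fold_right_app. simpl.
rewrite fold_plus_c. lra. Qed.

Lemma sumn_0 f : sumn 0 f = 0.
Proof. reflexivity. Qed.

Lemma sumn_ext n f g : (forall i, (i < n)%nat -> f i = g i) -> sumn n f = sumn n g.
Proof. induction n; intros H; [reflexivity|]. rewrite !sumn_S, IHn, H; auto. Qed.

Lemma sumn_plus n f g : sumn n (fun i => f i + g i) = sumn n f + sumn n g.
Proof. induction n; [simpl; unfold sumn; simpl; lra|]. rewrite !sumn_S, IHn; lra. Qed.

Lemma sumn_minus n f g : sumn n (fun i => f i - g i) = sumn n f - sumn n g.
Proof. induction n; [unfold sumn; simpl; lra|]. rewrite !sumn_S, IHn; lra. Qed.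

Lemma sumn_mult_l n c f : c * sumn n f = sumn n (fun i => c * f i).
Proof. induction n; [unfold sumn; simpl; lra|]. rewrite !sumn_S, <- IHn; lra. Qed.

Lemma sumn_mult_r n c f : sumn n f * c = sumn n (fun i => f i * c).
Proof. induction n; [unfold sumn; simpl; lra|]. rewrite !sumn_S, <- IHn; lra. Qed.

Lemma sumn_swap n m (f : nat -> nat -> R) :
  sumn n (fun i => sumn m (fun j => f i j)) = sumn m (fun j => sumn n (fun i => f i j)).
Proof. induction n.
- unfold sumn at 1; simpl. induction m; [reflexivity|]. rewrite sumn_S, <- IHm. unfold sumn; simpl; lra.
- rewrite sumn_S, IHn, <- sumn_plus. apply sumn_ext; intros. rewrite sumn_S. reflexivity. Qed.

Lemma sumn_zero n : sumn n (fun _ => 0) = 0.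
Proof. induction n; auto. rewrite sumn_S, IHn; lra. Qed.

Lemma sumn_single n f k : (k < n)%nat -> (forall i, (i < n)%nat -> i <> k -> f i = 0) -> sumn n f = f k.
Proof. induction n; intros Hk H; [lia|]. rewrite sumn_S.
destruct (Nat.eq_dec k n).
- subst. rewrite (sumn_ext _ _ (fun _ => 0)). 2:{ intros; apply H; lia. }
  rewrite sumn_zero; lra.
- rewrite IHn; try lia. rewrite (H n); try lia. lra. intros; apply H; lia. Qed.

Lemma kron_eq i : kron i i = 1.
Proof. unfold kron; rewrite Nat.eqb_refl; reflexivity. Qed.
Lemma kron_neq i j : i <> j -> kron i j = 0.
Proof. intros; unfold kron. destruct (Nat.eqb_spec i j); [contradiction|reflexivity]. Qed.

Lemma sumn_kron_r n f k : (k < n)%nat -> sumn n (fun i => f i * kron i k) = f k.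
Proof. intros. rewrite (sumn_single _ _ k); auto. rewrite kron_eq; lra.
intros; rewrite kron_neq; auto; lra. Qed.
Lemma sumn_kron_l n f k : (k < n)%nat -> sumn n (fun i => kron k i * f i) = f k.
Proof. intros. rewrite (sumn_single _ _ k); auto. rewrite kron_eq; lra.
intros; rewrite kron_neq; auto; lra. Qed.

Lemma sumn_abs n f : Rabs (sumn n f) <= sumn n (fun i => Rabs (f i)).
Proof. induction n; [unfold sumn; simpl; rewrite Rabs_R0; lra|]. rewrite !sumn_S.
eapply Rle_trans; [apply Rabs_triang|]. lra. Qed.

Lemma sumn_le n f g : (forall i, (i < n)%nat -> f i <= g i) -> sumn n f <= sumn n g.
Proof. induction n; intros H; [unfold sumn; simpl; lra|]. rewrite !sumn_S.
assert (f n <= g n) by (apply H; lia). assert (sumn n f <= sumn n g) by (apply IHn; intros; apply H; lia). lra. Qed.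

Lemma sumn_nonneg n f : (forall i, (i < n)%nat -> 0 <= f i) -> 0 <= sumn n f.
Proof. intros. rewrite <- (sumn_zero n). apply sumn_le; auto. Qed.


Lemma upd_at p k t : upd p k t k = t.
Proof. unfold upd; rewrite Nat.eqb_refl; auto. Qed.
Lemma upd_other p k t i : i <> k -> upd p k t i = p i.
Proof. intros; unfold upd. destruct (Nat.eqb_spec i k); [contradiction|auto]. Qed.
Lemma upd_upd p k a b : upd (upd p k a) k b = upd p k b.
Proof. apply functional_extensionality; intro i; unfold upd. destruct (Nat.eqb i k); auto. Qed.
Lemma upd_self p k : upd p k (p k) = p.
Proof. apply functional_extensionality; intro i; unfold upd. destruct (Nat.eqb_spec i k); subst; auto. Qed.
Lemma upd_comm p k j a b : k <> j -> upd (upd p k a) j b = upd (upd p j b) k a.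
Proof. intros; apply functional_extensionality; intro i; unfold upd.
destruct (Nat.eqb_spec i j), (Nat.eqb_spec i k); subst; auto; contradiction. Qed.

Lemma pd_unique f k p l :
  derivable_pt_lim (fun t => f (upd p k t)) (p k) l -> pd f k p = l.
Proof. intros H. unfold pd.
assert (Hs := epsilon_spec (inhabits 0) (fun l => derivable_pt_lim (fun t => f (upd p k t)) (p k) l) (ex_intro _ l H)).
simpl in Hs. eapply uniqueness_limite; eauto. Qed.

Lemma pd_spec f k p : (exists l, derivable_pt_lim (fun t => f (upd p k t)) (p k) l) ->
  derivable_pt_lim (fun t => f (upd p k t)) (p k) (pd f k p).
Proof. intros [l H]. rewrite (pd_unique _ _ _ _ H). exact H. Qed.

Lemma pd_local f g k p del : 0 < del ->
  (forall t, Rabs (t - p k) < del -> f (upd p k t) = g (upd p k t)) -> pd f k p = pd g k p.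
Proof. intros Hd H. unfold pd. f_equal. apply functional_extensionality; intro l.
apply propositional_extensionality. rewrite <- !is_derive_Reals.
assert (Hl : locally (p k) (fun t => f (upd p k t) = g (upd p k t))).
{ exists (mkposreal del Hd). intros t Ht. apply H. exact Ht. }
split; intros Hf.
- eapply is_derive_ext_loc; [exact Hl|exact Hf].
- assert (Hl' : locally (p k) (fun t => g (upd p k t) = f (upd p k t))).
  { exists (mkposreal del Hd). intros t Ht. symmetry. apply H. exact Ht. }
  eapply is_derive_ext_loc; [exact Hl'|exact Hf]. Qed.

Lemma dE_app ops1 ops2 F : dE (ops1 ++ ops2) F = dE ops1 (dE ops2 F).
Proof. induction ops1 as [|[b k] t IH]; simpl; auto. rewrite IH; auto. Qed.

Lemma smoothE_dE n F ops : smoothE n F -> List.Forall (fun o => (snd o < n)%nat) ops -> smoothE n (dE ops F).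
Proof. intros H Hops ops' Hops'. rewrite <- dE_app. apply H. apply Forall_app; auto. Qed.

Lemma smoothE_dy n F k : (k < n)%nat -> smoothE n F -> smoothE n (dy k F).
Proof. intros Hk H. apply (smoothE_dE n F ((false,k)::nil)); auto. Qed.
Lemma smoothE_dx n F k : (k < n)%nat -> smoothE n F -> smoothE n (dx k F).
Proof. intros Hk H. apply (smoothE_dE n F ((true,k)::nil)); auto. Qed.

Lemma smoothE_indep n F x y x' y' : smoothE n F -> nz n y ->
  (forall i, (i < n)%nat -> x' i = x i /\ y' i = y i) -> F x' y' = F x y.
Proof. intros HF Hy Hi. destruct (HF nil (List.Forall_nil _) x y Hy) as [Hc _]. simpl in Hc.
apply Rminus_diag_uniq. apply Rabs_eq_0. apply Rle_antisym; [|apply Rabs_pos].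
apply Rnot_lt_le; intro Hlt. destruct (Hc _ Hlt) as [d [Hd Hd']].
specialize (Hd' x' y'). assert (Rabs (F x' y' - F x y) < Rabs (F x' y' - F x y)); [|lra].
apply Hd'. intros i Hi'. destruct (Hi i Hi') as [-> ->]. rewrite !Rminus_eq_0, Rabs_R0. split; lra. Qed.

Lemma nz_near n y : nz n y -> exists d, 0 < d /\ forall y', (forall i, (i < n)%nat -> Rabs (y' i - y i) < d) -> nz n y'.
Proof. intros [i [Hi Hy]]. exists (Rabs (y i)). split; [apply Rabs_pos_lt; auto|].
intros y' H. exists i; split; auto. intro E. specialize (H i Hi). rewrite E in H.
rewrite Rminus_0_l, Rabs_Ropp in H. lra. Qed.


Lemma dlim_cont f x l : derivable_pt_lim f x l -> continuity_pt f x.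
Proof. intros H. apply (derivable_continuous_pt f x (exist _ l H)). Qed.

Definition mix (a b : vec) (m : nat) : vec := fun i => if (i <? m)%nat then b i else a i.
Definition box n (a b v : vec) : Prop :=
  forall i, (i < n)%nat -> Rmin (a i) (b i) <= v i <= Rmax (a i) (b i).

Lemma mix_0 a b : mix a b 0 = a.
Proof. reflexivity. Qed.
Lemma mix_S a b m : mix a b (S m) = upd (mix a b m) m (b m).
Proof. apply functional_extensionality; intro i; unfold mix, upd.
destruct (Nat.eqb_spec i m), (Nat.ltb_spec i (S m)), (Nat.ltb_spec i m); subst; auto; lia. Qed.
Lemma mix_at a b m : mix a b m m = a m.
Proof. unfold mix. rewrite Nat.ltb_irrefl. auto. Qed.

Lemma box_mix n a b m c : Rmin (a m) (b m) <= c <= Rmax (a m) (b m) -> box n a b (upd (mix a b m) m c).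
Proof. intros Hc i Hi. destruct (Nat.eq_dec i m); [subst; rewrite upd_at; auto|].
rewrite upd_other; auto. unfold mix. destruct (i <? m)%nat;
unfold Rmin, Rmax; destruct (Rle_dec (a i) (b i)); lra. Qed.

Lemma telescope n f a b D eps m : (m <= n)%nat ->
  (forall v j, box n a b v -> (j < n)%nat ->
     (exists l, derivable_pt_lim (fun t => f (upd v j t)) (v j) l) /\ Rabs (pd f j v - D j) <= eps) ->
  Rabs (f (mix a b m) - f a - sumn m (fun j => D j * (b j - a j))) <= eps * sumn m (fun j => Rabs (b j - a j)).
Proof. intros Hm H. induction m.
- rewrite mix_0, !sumn_0. replace (f a - f a - 0) with 0 by ring. rewrite Rabs_R0; lra.
- assert (IH := IHm ltac:(lia)). rewrite mix_S, !sumn_S.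
  set (v := mix a b m) in *.
  assert (Hf : forall c, (fun t => f (upd (upd v m c) m t)) = (fun t => f (upd v m t))).
  { intro c; apply functional_extensionality; intro t; rewrite upd_upd; auto. }
  assert (Hder : forall c, Rmin (a m) (b m) <= c <= Rmax (a m) (b m) ->
     derivable_pt_lim (fun t => f (upd v m t)) c (pd f m (upd v m c))).
  { intros c Hc. destruct (H (upd v m c) m (box_mix n a b m c Hc) ltac:(lia)) as [Hex _].
    apply pd_spec in Hex. rewrite Hf, upd_at in Hex. exact Hex. }
  destruct (MVT_gen (fun t => f (upd v m t)) (a m) (b m) (fun c => pd f m (upd v m c))) as [c [Hc Hmvt]].
  { intros c Hc. apply is_derive_Reals. apply Hder. lra. }
  { intros c Hc. eapply dlim_cont. apply Hder. exact Hc. }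
  simpl in Hmvt. assert (Hva : upd v m (a m) = v) by (replace (a m) with (v m) by (unfold v; apply mix_at); apply upd_self).
  rewrite Hva in Hmvt.
  destruct (H (upd v m c) m (box_mix n a b m c Hc) ltac:(lia)) as [_ HD].
  assert (Rabs (f (upd v m (b m)) - f v - D m * (b m - a m)) <= eps * Rabs (b m - a m)).
  { rewrite Hmvt. replace (pd f m (upd v m c) * (b m - a m) - D m * (b m - a m)) with
      ((pd f m (upd v m c) - D m) * (b m - a m)) by ring. rewrite Rabs_mult.
    apply Rmult_le_compat_r; auto. apply Rabs_pos. }
  replace (f (upd v m (b m)) - f a - (sumn m (fun j => D j * (b j - a j)) + D m * (b m - a m)))
    with ((f v - f a - sumn m (fun j => D j * (b j - a j))) + (f (upd v m (b m)) - f v - D m * (b m - a m))) by ring.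
  eapply Rle_trans; [apply Rabs_triang|]. lra. Qed.


Lemma fin_delta n (P : nat -> R -> Prop) :
  (forall j d d', P j d -> 0 < d' <= d -> P j d') ->
  (forall j, (j < n)%nat -> exists d, 0 < d /\ P j d) ->
  exists d, 0 < d /\ forall j, (j < n)%nat -> P j d.
Proof. intros Hm. induction n; intros H.
- exists 1; split; [lra|intros; lia].
- destruct IHn as [d1 [Hd1 H1]]. { intros; apply H; lia. }
  destruct (H n ltac:(lia)) as [d2 [Hd2 H2]].
  exists (Rmin d1 d2); split. { apply Rmin_glb_lt; auto. }
  intros j Hj. destruct (Nat.eq_dec j n).
  + subst. eapply Hm; [exact H2|]. split; [apply Rmin_glb_lt; auto|apply Rmin_r].
  + eapply Hm; [apply H1; lia|]. split; [apply Rmin_glb_lt; auto|apply Rmin_l]. Qed.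

Definition nearE n d (x y x' y' : vec) : Prop :=
  forall i, (i < n)%nat -> Rabs (x' i - x i) < d /\ Rabs (y' i - y i) < d.

Lemma box_le n a b v i : box n a b v -> (i < n)%nat -> Rabs (v i - a i) <= Rabs (b i - a i).
Proof. intros H Hi. specialize (H i Hi). unfold Rmin, Rmax in H.
destruct (Rle_dec (a i) (b i)); unfold Rabs; repeat destruct Rcase_abs; lra. Qed.

Lemma mix_n n a b i : (i < n)%nat -> mix a b n i = b i.
Proof. intros; unfold mix. destruct (Nat.ltb_spec i n); auto; lia. Qed.

Lemma diffE n F x y eps : smoothE n F -> nz n y -> 0 < eps ->
  exists d, 0 < d /\ forall x' y', nearE n d x y x' y' ->
   Rabs (F x' y' - F x y - sumn n (fun j => dx j F x y * (x' j - x j))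
           - sumn n (fun j => dy j F x y * (y' j - y j)))
   <= eps * (sumn n (fun j => Rabs (x' j - x j)) + sumn n (fun j => Rabs (y' j - y j))).
Proof. intros HF Hy He.
destruct (nz_near n y Hy) as [d0 [Hd0 Hnz]].
destruct (fin_delta n (fun j d => forall x' y', nearE n d x y x' y' ->
   Rabs (dx j F x' y' - dx j F x y) < eps /\ Rabs (dy j F x' y' - dy j F x y) < eps)) as [d1 [Hd1 H1]].
{ intros j d d' Hj Hd x' y' Hn. apply Hj. intros i Hi. destruct (Hn i Hi). split; lra. }
{ intros j Hj.
  destruct (HF ((true,j)::nil) ltac:(repeat constructor; simpl; auto) x y Hy) as [Cx _].
  destruct (HF ((false,j)::nil) ltac:(repeat constructor; simpl; auto) x y Hy) as [Cy _].
  destruct (Cx eps He) as [e1 [He1 Hx]]. destruct (Cy eps He) as [e2 [He2 Hy2]].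
  exists (Rmin e1 e2); split; [apply Rmin_glb_lt; auto|].
  intros x' y' Hn. split; [apply Hx|apply Hy2]; intros i Hi; destruct (Hn i Hi);
  pose proof (Rmin_l e1 e2); pose proof (Rmin_r e1 e2); split; lra. }
exists (Rmin d0 d1); split; [apply Rmin_glb_lt; auto|].
intros x' y' Hn.
assert (Hnz' : nz n y'). { apply Hnz. intros i Hi; destruct (Hn i Hi). pose proof (Rmin_l d0 d1); lra. }
assert (T1 := telescope n (fun v => F v y') x x' (fun j => dx j F x y) eps n (le_n n)).
assert (T2 := telescope n (fun v => F x v) y y' (fun j => dy j F x y) eps n (le_n n)).
cbv beta in T1, T2.
rewrite (smoothE_indep n F x' y' (mix x x' n) y') in T1; auto.
2:{ intros i Hi; rewrite mix_n; auto. }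
rewrite (smoothE_indep n F x y' x (mix y y' n)) in T2; auto.
2:{ intros i Hi; rewrite mix_n; auto. }
assert (A1 : Rabs (F x' y' - F x y' - sumn n (fun j => dx j F x y * (x' j - x j))) <= eps * sumn n (fun j => Rabs (x' j - x j))).
{ apply T1. intros v j Hv Hj. split.
  - destruct (HF nil (List.Forall_nil _) v y' Hnz') as [_ Hd]. apply (proj1 (Hd j Hj)).
  - apply Rlt_le. apply (H1 j Hj v y'). intros i Hi. destruct (Hn i Hi).
    pose proof (box_le n x x' v i Hv Hi). pose proof (Rmin_r d0 d1). split; lra. }
assert (A2 : Rabs (F x y' - F x y - sumn n (fun j => dy j F x y * (y' j - y j))) <= eps * sumn n (fun j => Rabs (y' j - y j))).
{ apply T2. intros v j Hv Hj. split.
  - assert (nz n v). { apply Hnz. intros i Hi. destruct (Hn i Hi).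
      pose proof (box_le n y y' v i Hv Hi). pose proof (Rmin_l d0 d1). lra. }
    destruct (HF nil (List.Forall_nil _) x v H) as [_ Hd]. apply (proj2 (Hd j Hj)).
  - apply Rlt_le. apply (H1 j Hj x v). intros i Hi. destruct (Hn i Hi).
    pose proof (box_le n y y' v i Hv Hi). pose proof (Rmin_r d0 d1).
    rewrite Rminus_eq_0, Rabs_R0. split; lra. }
replace (F x' y' - F x y - sumn n (fun j => dx j F x y * (x' j - x j)) - sumn n (fun j => dy j F x y * (y' j - y j)))
  with ((F x' y' - F x y' - sumn n (fun j => dx j F x y * (x' j - x j))) + (F x y' - F x y - sumn n (fun j => dy j F x y * (y' j - y j)))) by ring.
eapply Rle_trans; [apply Rabs_triang|]. lra. Qed.


Lemma chain n F (s : vec -> vec) x c (sd : nat -> R) :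
  smoothE n F -> nz n (s x) -> (c < n)%nat ->
  (forall b, (b < n)%nat -> derivable_pt_lim (fun t => s (upd x c t) b) (x c) (sd b)) ->
  derivable_pt_lim (fun t => F (upd x c t) (s (upd x c t))) (x c)
    (dx c F x (s x) + sumn n (fun b => dy b F x (s x) * sd b)).
Proof. intros HF Hnz Hc Hs eps Heps.
set (y0 := s x).
set (A := sumn n (fun b => Rabs (dy b F x y0))).
set (K1 := sumn n (fun b => Rabs (sd b) + 1)).
assert (HA : 0 <= A) by (apply sumn_nonneg; intros; apply Rabs_pos).
assert (HK : 0 <= K1) by (apply sumn_nonneg; intros; pose proof (Rabs_pos (sd i)); lra).
set (e1 := eps / (2 * (1 + K1))).
set (e2 := Rmin 1 (eps / (2 * (A + 1)))).
assert (He1 : 0 < e1) by (unfold e1; apply Rdiv_lt_0_compat; lra).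
assert (He2 : 0 < e2) by (unfold e2; apply Rmin_glb_lt; [lra|apply Rdiv_lt_0_compat; lra]).
destruct (diffE n F x y0 e1 HF Hnz He1) as [d0 [Hd0 Hdiff]].
destruct (fin_delta n (fun b d => (forall h, h <> 0 -> Rabs h < d ->
     Rabs ((s (upd x c (x c + h)) b - y0 b) / h - sd b) < e2) /\ d * (Rabs (sd b) + 1) <= d0)) as [d1 [Hd1 H1]].
{ intros b d d' [Hb1 Hb2] Hd. split.
  - intros h Hh Hh'; apply Hb1; auto; lra.
  - pose proof (Rabs_pos (sd b)). apply Rle_trans with (d * (Rabs (sd b) + 1)); auto.
    apply Rmult_le_compat_r; lra. }
{ intros b Hb. destruct (Hs b Hb e2 He2) as [dd Hdd].
  assert (Hpos : 0 < d0 / (Rabs (sd b) + 1)) by (apply Rdiv_lt_0_compat; [lra|pose proof (Rabs_pos (sd b)); lra]).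
  exists (Rmin dd (d0 / (Rabs (sd b) + 1))). split; [apply Rmin_glb_lt; auto; apply cond_pos|]. split.
  - intros h Hh Hh'. specialize (Hdd h Hh ltac:(pose proof (Rmin_l dd (d0 / (Rabs (sd b) + 1))); lra)).
    simpl in Hdd. rewrite upd_self in Hdd. exact Hdd.
  - pose proof (Rabs_pos (sd b)). pose proof (Rmin_r dd (d0 / (Rabs (sd b) + 1))).
    apply Rle_trans with (d0 / (Rabs (sd b) + 1) * (Rabs (sd b) + 1)).
    + apply Rmult_le_compat_r; lra.
    + right; field; lra. }
assert (Hdpos : 0 < Rmin d1 d0) by (apply Rmin_glb_lt; auto).
exists (mkposreal _ Hdpos). intros h Hh Hhd. simpl in Hhd.
pose proof (Rmin_l d1 d0). pose proof (Rmin_r d1 d0).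
set (X := upd x c (x c + h)). set (Y := s X).
rewrite upd_self. fold y0.
assert (HY : forall b, (b < n)%nat -> Rabs (Y b - y0 b - sd b * h) <= e2 * Rabs h).
{ intros b Hb. destruct (H1 b Hb) as [Hb1 _]. specialize (Hb1 h Hh ltac:(lra)).
  replace (Y b - y0 b - sd b * h) with (((s (upd x c (x c + h)) b - y0 b) / h - sd b) * h) by (unfold Y, X; field; auto).
  rewrite Rabs_mult. apply Rmult_le_compat_r; [apply Rabs_pos|lra]. }
assert (HY2 : forall b, (b < n)%nat -> Rabs (Y b - y0 b) <= (Rabs (sd b) + 1) * Rabs h).
{ intros b Hb. specialize (HY b Hb). assert (e2 <= 1) by (unfold e2; apply Rmin_l).
  replace (Y b - y0 b) with ((Y b - y0 b - sd b * h) + sd b * h) by ring.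
  eapply Rle_trans; [apply Rabs_triang|]. rewrite Rabs_mult.
  assert (e2 * Rabs h <= 1 * Rabs h) by (apply Rmult_le_compat_r; [apply Rabs_pos|lra]). lra. }
assert (Hnear : nearE n d0 x y0 X Y).
{ intros i Hi. split.
  - unfold X. destruct (Nat.eq_dec i c).
    + subst. rewrite upd_at. replace (x c + h - x c) with h by ring. lra.
    + rewrite upd_other; auto. rewrite Rminus_diag, Rabs_R0; lra.
  - destruct (H1 i Hi) as [_ Hb2]. specialize (HY2 i Hi).
    apply Rle_lt_trans with ((Rabs (sd i) + 1) * Rabs h); auto.
    pose proof (Rabs_pos (sd i)).
    apply Rlt_le_trans with ((Rabs (sd i) + 1) * d1); [apply Rmult_lt_compat_l; lra|lra]. }
specialize (Hdiff X Y Hnear).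
assert (Ex : sumn n (fun j => dx j F x y0 * (X j - x j)) = dx c F x y0 * h).
{ rewrite (sumn_single n _ c Hc). unfold X; rewrite upd_at; ring.
  intros i Hi Hic. unfold X; rewrite upd_other; auto. ring. }
assert (Ex2 : sumn n (fun j => Rabs (X j - x j)) = Rabs h).
{ rewrite (sumn_single n _ c Hc). unfold X; rewrite upd_at. f_equal; ring.
  intros i Hi Hic. unfold X; rewrite upd_other; auto. rewrite Rminus_diag; apply Rabs_R0. }
rewrite Ex, Ex2 in Hdiff.
assert (Sy : sumn n (fun j => Rabs (Y j - y0 j)) <= K1 * Rabs h).
{ unfold K1. rewrite sumn_mult_r. apply sumn_le. intros; apply HY2; auto. }
assert (Sd : Rabs (sumn n (fun b => dy b F x y0 * (Y b - y0 b - sd b * h))) <= A * e2 * Rabs h).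
{ eapply Rle_trans; [apply sumn_abs|]. unfold A. rewrite !sumn_mult_r. apply sumn_le.
  intros b Hb. rewrite Rabs_mult, Rmult_assoc. apply Rmult_le_compat_l; [apply Rabs_pos|]. apply HY; auto. }
assert (Hhp : 0 < Rabs h) by (apply Rabs_pos_lt; auto).
assert (Key : Rabs (F X Y - F x y0 - h * (dx c F x y0 + sumn n (fun b => dy b F x y0 * sd b))) < eps * Rabs h).
{ replace (F X Y - F x y0 - h * (dx c F x y0 + sumn n (fun b => dy b F x y0 * sd b))) with
    ((F X Y - F x y0 - dx c F x y0 * h - sumn n (fun j => dy j F x y0 * (Y j - y0 j)))
     + sumn n (fun b => dy b F x y0 * (Y b - y0 b - sd b * h))).
  2:{ assert (EE : sumn n (fun b => dy b F x y0 * (Y b - y0 b - sd b * h)) =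
              sumn n (fun j => dy j F x y0 * (Y j - y0 j)) - h * sumn n (fun b => dy b F x y0 * sd b)).
      { rewrite sumn_mult_l, <- sumn_minus. apply sumn_ext; intros; ring. }
      rewrite EE. ring. }
  eapply Rle_lt_trans; [apply Rabs_triang|].
  assert (e1 * (Rabs h + sumn n (fun j => Rabs (Y j - y0 j))) <= e1 * (1 + K1) * Rabs h).
  { replace (e1 * (1 + K1) * Rabs h) with (e1 * (Rabs h + K1 * Rabs h)) by ring.
    apply Rmult_le_compat_l; lra. }
  assert (E1 : e1 * (1 + K1) = eps / 2) by (unfold e1; field; lra).
  assert (E2 : A * e2 <= eps / 2 * (A / (A + 1))).
  { assert (e2 <= eps / (2 * (A + 1))) by (unfold e2; apply Rmin_r).
    apply Rle_trans with (A * (eps / (2 * (A + 1)))). apply Rmult_le_compat_l; auto.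
    right; field; lra. }
  assert (A / (A + 1) < 1). { apply (Rmult_lt_reg_r (A + 1)); [lra|]. unfold Rdiv; rewrite Rmult_assoc, Rinv_l; lra. }
  assert (A * e2 * Rabs h < eps / 2 * Rabs h).
  { apply Rmult_lt_compat_r; auto. apply Rle_lt_trans with (eps / 2 * (A / (A + 1))); auto.
    rewrite <- (Rmult_1_r (eps/2)) at 2. apply Rmult_lt_compat_l; lra. }
  rewrite E1 in H2. lra. }
replace ((F X Y - F x y0) / h - (dx c F x y0 + sumn n (fun b => dy b F x y0 * sd b)))
  with ((F X Y - F x y0 - h * (dx c F x y0 + sumn n (fun b => dy b F x y0 * sd b))) / h) by (field; auto).
unfold Rdiv. rewrite Rabs_mult, Rabs_inv.
apply (Rmult_lt_reg_r (Rabs h)); auto. rewrite Rmult_assoc, Rinv_l; lra. Qed.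


Section Sch.
Variables (n : nat) (x y : vec) (a b : nat).
Hypothesis Hab : a <> b.
Let P u v := upd (upd y a u) b v.

Lemma P_b u v : P u v b = v.
Proof. unfold P; apply upd_at. Qed.
Lemma P_a u v : P u v a = u.
Proof. unfold P; rewrite upd_other; auto; apply upd_at. Qed.
Lemma P_upd_b u v t : upd (P u v) b t = P u t.
Proof. unfold P; apply upd_upd. Qed.
Lemma P_upd_a u v t : upd (P u v) a t = P t v.
Proof. unfold P. rewrite upd_comm by auto. rewrite upd_upd. auto. Qed.
Lemma P_y : P (y a) (y b) = y.
Proof. unfold P. rewrite !upd_self. auto. Qed.

Lemma P_near u v i : (i < n)%nat -> Rabs (P u v i - y i) <= Rabs (u - y a) + Rabs (v - y b).
Proof. intros Hi. pose proof (Rabs_pos (u - y a)). pose proof (Rabs_pos (v - y b)).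
destruct (Nat.eq_dec i b). { subst. rewrite P_b. lra. }
destruct (Nat.eq_dec i a). { subst. rewrite P_a. lra. }
unfold P. rewrite !upd_other; auto. rewrite Rminus_diag, Rabs_R0; lra. Qed.

Lemma P_der G u v : smoothE n G -> nz n (P u v) -> (a < n)%nat -> (b < n)%nat ->
  is_derive (fun t => G x (P u t)) v (dy b G x (P u v)) /\
  is_derive (fun t => G x (P t v)) u (dy a G x (P u v)).
Proof. intros HG Hnz Ha Hb. destruct (HG nil (List.Forall_nil _) x (P u v) Hnz) as [_ Hd].
split; apply is_derive_Reals.
- assert (H := pd_spec (fun y' => G x y') b (P u v) (proj2 (Hd b Hb))). simpl in H.
  rewrite P_b in H. unfold dy.
  assert (E : (fun t => G x (upd (P u v) b t)) = (fun t => G x (P u t)))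
    by (apply functional_extensionality; intro; rewrite P_upd_b; auto).
  rewrite E in H. exact H.
- assert (H := pd_spec (fun y' => G x y') a (P u v) (proj2 (Hd a Ha))). simpl in H.
  rewrite P_a in H. unfold dy.
  assert (E : (fun t => G x (upd (P u v) a t)) = (fun t => G x (P t v)))
    by (apply functional_extensionality; intro; rewrite P_upd_a; auto).
  rewrite E in H. exact H. Qed.

End Sch.

Lemma schwarzE n F x y a b : smoothE n F -> nz n y -> (a < n)%nat -> (b < n)%nat ->
  dy a (dy b F) x y = dy b (dy a F) x y.
Proof. intros HF Hy Ha Hb. destruct (Nat.eq_dec a b); [subst; auto|].
destruct (nz_near n y Hy) as [d0 [Hd0 Hnz]].
set (f := fun u v => F x (upd (upd y a u) b v)).
assert (HN : forall u v, Rabs (u - y a) < d0 / 2 -> Rabs (v - y b) < d0 / 2 -> nz n (upd (upd y a u) b v)).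
{ intros u v Hu Hv. apply Hnz. intros i Hi. pose proof (P_near n y a b n0 u v i Hi). lra. }
assert (Hdyb := smoothE_dy n F b Hb HF). assert (Hdya := smoothE_dy n F a Ha HF).
assert (I1 : forall z v, Rabs (z - y a) < d0 / 2 -> Rabs (v - y b) < d0 / 2 ->
   Derive (fun t => f z t) v = dy b F x (upd (upd y a z) b v)).
{ intros z v Hz Hv. apply is_derive_unique. apply (P_der n x y a b n0 F z v HF (HN z v Hz Hv) Ha Hb). }
assert (I2 : forall z u, Rabs (u - y a) < d0 / 2 -> Rabs (z - y b) < d0 / 2 ->
   Derive (fun t => f t z) u = dy a F x (upd (upd y a u) b z)).
{ intros z u Hu Hz. apply is_derive_unique. apply (P_der n x y a b n0 F u z HF (HN u z Hu Hz) Ha Hb). }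
assert (O1 : forall u v, Rabs (u - y a) < d0 / 4 -> Rabs (v - y b) < d0 / 4 ->
   is_derive (fun z => Derive (fun t => f z t) v) u (dy a (dy b F) x (upd (upd y a u) b v))).
{ intros u v Hu Hv. apply is_derive_ext_loc with (fun z => dy b F x (upd (upd y a z) b v)).
  - assert (Hp : 0 < d0 / 4) by lra. exists (mkposreal _ Hp). intros z Hz. simpl in Hz.
    unfold ball in Hz; simpl in Hz; unfold AbsRing_ball, abs, minus, plus, opp in Hz; simpl in Hz.
    symmetry. apply I1; [|lra]. replace (z - y a) with ((z + - u) + (u - y a)) by ring.
    eapply Rle_lt_trans; [apply Rabs_triang|]. lra.
  - apply (P_der n x y a b n0 (dy b F) u v Hdyb (HN u v ltac:(lra) ltac:(lra)) Ha Hb). }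
assert (O2 : forall u v, Rabs (u - y a) < d0 / 4 -> Rabs (v - y b) < d0 / 4 ->
   is_derive (fun z => Derive (fun t => f t z) u) v (dy b (dy a F) x (upd (upd y a u) b v))).
{ intros u v Hu Hv. apply is_derive_ext_loc with (fun z => dy a F x (upd (upd y a u) b z)).
  - assert (Hp : 0 < d0 / 4) by lra. exists (mkposreal _ Hp). intros z Hz. simpl in Hz.
    unfold ball in Hz; simpl in Hz; unfold AbsRing_ball, abs, minus, plus, opp in Hz; simpl in Hz.
    symmetry. apply I2; [lra|]. replace (z - y b) with ((z + - v) + (v - y b)) by ring.
    eapply Rle_lt_trans; [apply Rabs_triang|]. lra.
  - apply (P_der n x y a b n0 (dy a F) u v Hdya (HN u v ltac:(lra) ltac:(lra)) Ha Hb). }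
assert (Hp4 : 0 < d0 / 4) by lra.
assert (Hs := Schwarz f (y a) (y b)).
assert (E1 : Derive (fun z => Derive (fun t => f z t) (y b)) (y a) = dy a (dy b F) x y).
{ apply is_derive_unique. pose proof (O1 (y a) (y b) ltac:(rewrite Rminus_diag, Rabs_R0; lra) ltac:(rewrite Rminus_diag, Rabs_R0; lra)) as HH.
  rewrite !upd_self in HH. exact HH. }
assert (E2 : Derive (fun z => Derive (fun t => f t z) (y a)) (y b) = dy b (dy a F) x y).
{ apply is_derive_unique. pose proof (O2 (y a) (y b) ltac:(rewrite Rminus_diag, Rabs_R0; lra) ltac:(rewrite Rminus_diag, Rabs_R0; lra)) as HH.
  rewrite !upd_self in HH. exact HH. }
rewrite <- E1, <- E2. apply Hs.
- exists (mkposreal _ Hp4). intros u v Hu Hv. simpl in Hu, Hv.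
  assert (Hu2 : Rabs (u - y a) < d0 / 2) by lra. assert (Hv2 : Rabs (v - y b) < d0 / 2) by lra.
  split; [|split; [|split]].
  + eexists. apply (P_der n x y a b n0 F u v HF (HN u v Hu2 Hv2) Ha Hb).
  + eexists. apply (P_der n x y a b n0 F u v HF (HN u v Hu2 Hv2) Ha Hb).
  + eexists. apply O1; auto.
  + eexists. apply O2; auto.
- intros eps. destruct (HF ((false,a)::(false,b)::nil) ltac:(repeat constructor; simpl; auto) x y Hy) as [Hc _].
  destruct (Hc eps (cond_pos eps)) as [dd [Hdd Hc']].
  assert (Hm : 0 < Rmin (d0 / 4) (dd / 2)) by (apply Rmin_glb_lt; lra).
  exists (mkposreal _ Hm). intros u v Hu Hv. simpl in Hu, Hv.
  pose proof (Rmin_l (d0/4) (dd/2)). pose proof (Rmin_r (d0/4) (dd/2)).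
  match goal with |- Rabs (?A - ?B) < _ =>
    replace A with (dy a (dy b F) x (upd (upd y a u) b v));
    [replace B with (dy a (dy b F) x y)|] end.
  2:{ symmetry. apply is_derive_unique. exact (O1 u v ltac:(lra) ltac:(lra)). }
  apply Hc'. intros i Hi. rewrite Rminus_diag, Rabs_R0.
  pose proof (P_near n y a b n0 u v i Hi). split; lra.
- intros eps. destruct (HF ((false,b)::(false,a)::nil) ltac:(repeat constructor; simpl; auto) x y Hy) as [Hc _].
  destruct (Hc eps (cond_pos eps)) as [dd [Hdd Hc']].
  assert (Hm : 0 < Rmin (d0 / 4) (dd / 2)) by (apply Rmin_glb_lt; lra).
  exists (mkposreal _ Hm). intros u v Hu Hv. simpl in Hu, Hv.
  pose proof (Rmin_l (d0/4) (dd/2)). pose proof (Rmin_r (d0/4) (dd/2)).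
  match goal with |- Rabs (?A - ?B) < _ =>
    replace A with (dy b (dy a F) x (upd (upd y a u) b v));
    [replace B with (dy b (dy a F) x y)|] end.
  2:{ symmetry. apply is_derive_unique. exact (O2 u v ltac:(lra) ltac:(lra)). }
  apply Hc'. intros i Hi. rewrite Rminus_diag, Rabs_R0.
  pose proof (P_near n y a b n0 u v i Hi). split; lra.
Qed.


Lemma sumn_ext2 n m f g : (forall i j, (i < n)%nat -> (j < m)%nat -> f i j = g i j) ->
  sumn n (fun i => sumn m (fun j => f i j)) = sumn n (fun i => sumn m (fun j => g i j)).
Proof. intros H. apply sumn_ext; intros i Hi. apply sumn_ext; intros; auto. Qed.

Lemma alg n (Wv pW : nat -> R) (Pg : nat -> nat -> nat -> R) (G N sd dxZ dyZ : nat -> nat -> R)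
  (dxg dyg : nat -> nat -> nat -> R) :
  (forall a, (a < n)%nat -> pW a = dxZ a a + sumn n (fun b => dyZ b a * sd a b)) ->
  (forall i j c, (i < n)%nat -> (j < n)%nat -> (c < n)%nat ->
     Pg i j c = dxg c i j + sumn n (fun b => dyg b i j * sd c b)) ->
  (forall a b, (a < n)%nat -> (b < n)%nat -> G a b = G b a) ->
  (forall c i j, (c < n)%nat -> (i < n)%nat -> (j < n)%nat -> dxg c i j = dxg c j i) ->
  (forall c i j, (c < n)%nat -> (i < n)%nat -> (j < n)%nat -> dyg c i j = dyg c j i) ->
  (forall b s a, (b < n)%nat -> (s < n)%nat -> (a < n)%nat -> dyg b s a = dyg a s b) ->
  sumn n (fun a => pW a + sumn n (fun b => / 2 * sumn n (fun si => G a si * (Pg si b a + Pg si a b - Pg a b si)) * Wv b)) =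
  sumn n (fun a => (dxZ a a - sumn n (fun nu => N nu a * dyZ nu a)) +
     sumn n (fun mu => / 2 * sumn n (fun si => G a si *
        ((dxg mu si a - sumn n (fun nu => N nu mu * dyg nu si a))
       + (dxg a si mu - sumn n (fun nu => N nu a * dyg nu si mu))
       - (dxg si mu a - sumn n (fun nu => N nu si * dyg nu mu a)))) * Wv mu))
  + sumn n (fun mu => sumn n (fun a => sumn n (fun b => G a b * (/ 2 * dyg a b mu))) * sumn n (fun a => Wv a * (sd a mu + N mu a)))
  + sumn n (fun mu => sumn n (fun b => dyZ b mu * (sd mu b + N b mu))).
Proof. intros HpW HPg HG Hdx Hdy Hdy3.
set (dd := fun c i j => dxg c i j - sumn n (fun nu => N nu c * dyg nu i j)).
set (Q := fun i j c => sumn n (fun b => dyg b i j * (sd c b + N b c))).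
assert (HQ : forall i j c, (i < n)%nat -> (j < n)%nat -> (c < n)%nat -> Pg i j c = dd c i j + Q i j c).
{ intros i j c Hi Hj Hc. rewrite HPg; auto. unfold dd, Q.
  assert (E : sumn n (fun b => dyg b i j * (sd c b + N b c)) =
     sumn n (fun b => dyg b i j * sd c b) + sumn n (fun nu => N nu c * dyg nu i j)).
  { rewrite <- sumn_plus. apply sumn_ext; intros; ring. }
  rewrite E. ring. }
assert (Hdd : forall c i j, (c < n)%nat -> (i < n)%nat -> (j < n)%nat -> dd c i j = dd c j i).
{ intros c i j Hc Hi Hj. unfold dd. rewrite Hdx; auto. f_equal. apply sumn_ext; intros; rewrite Hdy; auto. }
rewrite sumn_plus. rewrite (sumn_plus n (fun a => dxZ a a - sumn n (fun nu => N nu a * dyZ nu a))).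
assert (C1 : sumn n pW = sumn n (fun a => dxZ a a - sumn n (fun nu => N nu a * dyZ nu a))
   + sumn n (fun mu => sumn n (fun b => dyZ b mu * (sd mu b + N b mu)))).
{ rewrite <- sumn_plus. apply sumn_ext; intros a Ha. rewrite HpW; auto.
  assert (E : sumn n (fun b => dyZ b a * (sd a b + N b a)) =
     sumn n (fun b => dyZ b a * sd a b) + sumn n (fun nu => N nu a * dyZ nu a)).
  { rewrite <- sumn_plus. apply sumn_ext; intros; ring. }
  rewrite E. ring. }
set (GH := fun a mu => / 2 * sumn n (fun si => G a si *
        ((dxg mu si a - sumn n (fun nu => N nu mu * dyg nu si a))
       + (dxg a si mu - sumn n (fun nu => N nu a * dyg nu si mu))
       - (dxg si mu a - sumn n (fun nu => N nu si * dyg nu mu a))))).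
set (R2 := sumn n (fun mu => sumn n (fun a => sumn n (fun b => G a b * (/ 2 * dyg a b mu))) * sumn n (fun a => Wv a * (sd a mu + N mu a)))).
set (T1 := fun a b => / 2 * sumn n (fun si => G a si * Q si b a)).
set (T2 := fun a b => / 2 * sumn n (fun si => G a si * Q si a b)).
set (T3 := fun a b => / 2 * sumn n (fun si => G a si * Q a b si)).
assert (Hb : forall a b, (a < n)%nat -> (b < n)%nat ->
   / 2 * sumn n (fun si => G a si * (Pg si b a + Pg si a b - Pg a b si)) = GH a b + T1 a b + T2 a b - T3 a b).
{ intros a b Ha Hb. unfold GH, T1, T2, T3. rewrite !sumn_mult_l, <- !sumn_plus, <- sumn_minus.
  apply sumn_ext; intros si Hsi. rewrite !HQ; auto. rewrite (Hdd si a b); auto. fold (dd b si a) (dd a si b) (dd si b a). ring. }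
assert (C2 : sumn n (fun a => sumn n (fun b => / 2 * sumn n (fun si => G a si * (Pg si b a + Pg si a b - Pg a b si)) * Wv b))
   = sumn n (fun a => sumn n (fun mu => GH a mu * Wv mu))
     + sumn n (fun a => sumn n (fun b => T1 a b * Wv b))
     + sumn n (fun a => sumn n (fun b => T2 a b * Wv b))
     - sumn n (fun a => sumn n (fun b => T3 a b * Wv b))).
{ rewrite <- !sumn_plus, <- sumn_minus. apply sumn_ext; intros a Ha.
  rewrite <- !sumn_plus, <- sumn_minus. apply sumn_ext; intros b Hb'. rewrite Hb; auto. ring. }
assert (C3 : sumn n (fun a => sumn n (fun b => T1 a b * Wv b)) = sumn n (fun a => sumn n (fun b => T3 a b * Wv b))).
{ rewrite (sumn_swap n n (fun a b => T1 a b * Wv b)), (sumn_swap n n (fun a b => T3 a b * Wv b)).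
  apply sumn_ext; intros b Hb'. rewrite <- !sumn_mult_r. f_equal. unfold T1, T3.
  rewrite <- !sumn_mult_l. f_equal.
  rewrite (sumn_swap n n (fun a si => G a si * Q a b si)). apply sumn_ext2. intros a si Ha Hsi. rewrite HG; auto. }
assert (C4 : sumn n (fun a => sumn n (fun b => T2 a b * Wv b)) = R2).
{ unfold R2, T2, Q.
  transitivity (sumn n (fun a => sumn n (fun si => sumn n (fun be => sumn n (fun b =>
      G a si * (/ 2 * dyg a si be) * (Wv b * (sd b be + N be b))))))).
  - apply sumn_ext; intros a Ha.
    transitivity (sumn n (fun b => sumn n (fun si => sumn n (fun be => G a si * (/ 2 * dyg a si be) * (Wv b * (sd b be + N be b)))))).
    + apply sumn_ext; intros b Hb'. rewrite sumn_mult_l, sumn_mult_r. apply sumn_ext; intros si Hsi.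
      transitivity ((/ 2 * G a si * Wv b) * sumn n (fun be => dyg be si a * (sd b be + N be b))); [ring|].
      rewrite sumn_mult_l. apply sumn_ext; intros be Hbe. rewrite (Hdy3 be si a); auto. ring.
    + rewrite sumn_swap. apply sumn_ext; intros si Hsi. rewrite sumn_swap. reflexivity.
  - transitivity (sumn n (fun a => sumn n (fun be => sumn n (fun si => sumn n (fun b =>
      G a si * (/ 2 * dyg a si be) * (Wv b * (sd b be + N be b))))))).
    { apply sumn_ext; intros a Ha. apply sumn_swap. }
    rewrite sumn_swap. apply sumn_ext; intros be Hbe.
    rewrite sumn_mult_r. apply sumn_ext; intros a Ha. rewrite sumn_mult_r. apply sumn_ext; intros si Hsi.
    rewrite sumn_mult_l. reflexivity. }
rewrite C1, C2, C3. fold R2. rewrite <- C4. unfold GH. ring. Qed.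


Lemma ginv_sym n (g Gi : nat -> nat -> R) :
  (forall i j, (i < n)%nat -> (j < n)%nat -> g i j = g j i) ->
  (forall i j, (i < n)%nat -> (j < n)%nat -> sumn n (fun k => g i k * Gi k j) = kron i j) ->
  forall a b, (a < n)%nat -> (b < n)%nat -> Gi a b = Gi b a.
Proof. intros Hg Hi a b Ha Hb.
assert (E1 : sumn n (fun m => Gi m a * sumn n (fun v => g m v * Gi v b)) = Gi b a).
{ rewrite (sumn_ext _ _ (fun m => Gi m a * kron m b)). apply (sumn_kron_r n (fun m => Gi m a) b); auto.
  intros m Hm. rewrite Hi; auto. }
assert (E2 : sumn n (fun m => Gi m a * sumn n (fun v => g m v * Gi v b)) = Gi a b).
{ transitivity (sumn n (fun v => sumn n (fun m => g v m * Gi m a) * Gi v b)).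
  - rewrite (sumn_ext _ _ (fun m => sumn n (fun v => Gi m a * (g m v * Gi v b)))).
    2:{ intros; apply sumn_mult_l. }
    rewrite sumn_swap. apply sumn_ext; intros v Hv. rewrite sumn_mult_r. apply sumn_ext; intros m Hm.
    rewrite (Hg v m); auto. ring.
  - rewrite (sumn_ext _ _ (fun v => Gi v b * kron v a)). apply (sumn_kron_r n (fun v => Gi v b) a); auto.
    intros v Hv. rewrite Hi; auto. ring. }
rewrite <- E1, <- E2; auto. Qed.

Lemma dy_local n F1 F2 k x y : nz n y ->
  (forall y', nz n y' -> F1 x y' = F2 x y') -> dy k F1 x y = dy k F2 x y.
Proof. intros Hy H. destruct (nz_near n y Hy) as [d0 [Hd0 Hnz]]. unfold dy.
apply pd_local with d0; auto. intros t Ht. apply H. apply Hnz. intros i Hi.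
destruct (Nat.eq_dec i k). { subst; rewrite upd_at; auto. }
rewrite upd_other; auto. rewrite Rminus_diag, Rabs_R0; lra. Qed.

Theorem mainTheorem4
  (n : nat) (L : Efun) (ginv : nat -> nat -> Efun)
  (Z : nat -> Efun) (s : vec -> vec)
  (HL : smoothE n L)
  (Hhom : forall x y (lam : R), nz n y -> 0 < lam ->
            L x (fun i => lam * y i) = lam ^ 2 * L x y)
  (Hinv : forall x y, nz n y -> forall mu la, (mu < n)%nat -> (la < n)%nat ->
            sumn n (fun nu => gF L mu nu x y * ginv nu la x y) = kron mu la)
  (HZ : forall mu, (mu < n)%nat -> smoothE n (Z mu))
  (Hs : forall mu, (mu < n)%nat -> smoothM n (fun x => s x mu))
  (Hs0 : forall x, nz n (s x)) :
  forall x : vec,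
    divLC n L ginv s (pullZ s Z) x =
      pullE s (divHC n L ginv Z) x
      + sumn n (fun mu => meanCartan n L ginv mu x (s x) * DWs n L ginv s (pullZ s Z) mu x)
      + sumn n (fun mu => sumn n (fun b => dy b (Z mu) x (s x) * Ds n L ginv s mu b x)).
Proof.
intros x. assert (Hy0 := Hs0 x).
assert (Hsd : forall c b, (c < n)%nat -> (b < n)%nat ->
   derivable_pt_lim (fun t => s (upd x c t) b) (x c) (pd (fun x' => s x' b) c x)).
{ intros c b Hc Hb. destruct (Hs b Hb nil (List.Forall_nil _) x) as [_ Hd].
  apply (pd_spec (fun x' => s x' b) c x). apply (Hd c Hc). }
assert (Hch : forall F c, smoothE n F -> (c < n)%nat ->
   pd (fun x' => F x' (s x')) c x = dx c F x (s x) + sumn n (fun b => dy b F x (s x) * pd (fun x' => s x' b) c x)).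
{ intros F c HF Hc. apply pd_unique. apply chain; auto. }
assert (HgS : forall i j, (i < n)%nat -> (j < n)%nat -> smoothE n (gF L i j)).
{ intros i j Hi Hj. unfold gF. apply smoothE_dy; auto. apply smoothE_dy; auto. }
assert (Hsym : forall i j x0 y, (i < n)%nat -> (j < n)%nat -> nz n y -> gF L i j x0 y = gF L j i x0 y).
{ intros i j x0 y Hi Hj Hy. unfold gF. apply (schwarzE n); auto. }
apply (alg n (fun b => Z b x (s x)) (fun a => pd (pullZ s Z a) a x)
  (fun i j c => pd (pullE s (gF L i j)) c x) (fun a b => ginv a b x (s x))
  (fun a b => Nlin n L ginv a b x (s x)) (fun c b => pd (fun x' => s x' b) c x)
  (fun a m => dx a (Z m) x (s x)) (fun b m => dy b (Z m) x (s x))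
  (fun c i j => dx c (gF L i j) x (s x)) (fun b i j => dy b (gF L i j) x (s x))).
- intros a Ha. apply Hch; auto.
- intros i j c Hi Hj Hc. apply Hch; auto.
- apply ginv_sym with (g := fun i j => gF L i j x (s x)).
  + intros i j Hi Hj. apply Hsym; auto.
  + intros i j Hi Hj. apply Hinv; auto.
- intros c i j Hc Hi Hj. unfold dx. f_equal. apply functional_extensionality; intro x'.
  apply Hsym; auto.
- intros c i j Hc Hi Hj. simpl. apply (dy_local n). exact Hy0. intros y' Hy'. apply Hsym; auto.
- intros b si a Hb Hsi Ha. unfold gF.
  transitivity (dy b (dy a (dy si L)) x (s x)).
  { apply (dy_local n); auto. intros y' Hy'. apply (schwarzE n); auto. }
  rewrite (schwarzE n); auto. 2:{ apply smoothE_dy; auto. }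
  apply (dy_local n); auto. intros y' Hy'. apply (schwarzE n); auto.
Qed.
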